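(* Let $\mathcal G$ be a doubly connected molecular graph. Construct $\mathcal G_{new}$ from $\mathcal G$ as follows: add a new molecule $\mathcal M_{new}$; add a diffusive edge $b_1$ joining $\mathcal M_{new}$ and a molecule $\mathcal M_1$ of $\mathcal G$, and a blue solid edge $b_2$ joining $\mathcal M_{new}$ and a molecule $\mathcal M_2$ of $\mathcal G$; and replace a blue solid edge $b$ of $\mathcal G$ joining molecules $\mathcal M_3$ and $\mathcal M_4$ by two blue solid edges, $b_3$ joining $\mathcal M_3$ and $\mathcal M_{new}$ and $b_4$ joining $\mathcal M_4$ and $\mathcal M_{new}$. Then the blue solid edge $b_2$ is redundant in $\mathcal G_{new}$.
   Context: A molecular graph is a finite multigraph whose vertices are called molecules and each of whose edges joins two distinct molecules and is either a diffusive edge or a blue solid edge (parallel edges are allowed). A molecular graph is doubly connected if there exist two disjoint sets of edges, $\mathcal B_{black}$ consisting only of diffusive edges and $\mathcal B_{blue}$ consisting only of blue solid or diffusive edges, such that each of $\mathcal B_{black}$ and $\mathcal B_{blue}$ contains a spanning tree of the set of all molecules. A blue solid edge $e$ of a doubly connected graph is redundant if the graph obtained by deleting $e$ is still doubly connected. *)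

(* Defs.v *)
From mathcomp Require Import all_boot.
Set Implicit Arguments. Unset Strict Implicit. Unset Printing Implicit Defensive.

(* A molecular graph: a finite type V of molecules, a finite type E of edges
   (parallel edges allowed), endpoints [ends e] and a kind for each edge. *)
Inductive ekind := Diffusive | BlueSolid.
Definition ekind_eqb (a b : ekind) : bool :=
  match a, b with Diffusive, Diffusive | BlueSolid, BlueSolid => true | _, _ => false end.

Section Molecular.
Variables (V E : finType) (ends : E -> V * V) (kind : E -> ekind).

Definition molecular_graph : Prop := forall e, (ends e).1 <> (ends e).2.

Definition adj (B : {set E}) : rel V :=
  fun x y => [exists e in B, (ends e == (x, y)) || (ends e == (y, x))].

Definition connected_by (B : {set E}) : Prop := forall x y, connect (adj B) x y.

(* T is a spanning tree of the set of all molecules: connected, and minimally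
   so (removing any edge of T disconnects it, i.e. T has no cycle). *)
Definition spanning_tree (T : {set E}) : Prop :=
  connected_by T /\ forall e, e \in T -> ~ connected_by (T :\ e).

Definition contains_spanning_tree (B : {set E}) : Prop :=
  exists T : {set E}, T \subset B /\ spanning_tree T.

Definition doubly_connected : Prop :=
  exists Bblack Bblue : {set E},
    [/\ [disjoint Bblack & Bblue],
        (forall e, e \in Bblack -> kind e = Diffusive),
        (forall e, e \in Bblue -> kind e = BlueSolid \/ kind e = Diffusive),
        contains_spanning_tree Bblack & contains_spanning_tree Bblue].
End Molecular.

Definition del_ends (V E : finType) (ends : E -> V * V) (e : E)
  (x : {x : E | x != e}) : V * V := ends (val x).
Definition del_kind (E : finType) (kind : E -> ekind) (e : E)
  (x : {x : E | x != e}) : ekind := kind (val x).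

Definition redundant (V E : finType) (ends : E -> V * V) (kind : E -> ekind) (e : E)
  : Prop :=
  [/\ kind e = BlueSolid, doubly_connected ends kind &
      doubly_connected (del_ends ends (e:=e)) (del_kind kind (e:=e))].

(* The new graph G_new: molecules [option V] (None = M_new); edges are the old
   edges other than b, plus four new ones indexed by 'I_4:
   0 = b1 (diffusive, M_new -- M1), 1 = b2 (blue, M_new -- M2),
   2 = b3 (blue, M3 -- M_new), 3 = b4 (blue, M4 -- M_new),
   where (M3, M4) = ends b. *)
Definition new_edge (E : finType) (b : E) : finType :=
  ({x : E | x != b} + 'I_4)%type.

Definition new_ends (V E : finType) (ends : E -> V * V) (b : E) (M1 M2 : V)
  (x : new_edge b) : option V * option V :=
  match x with
  | inl y => (Some (ends (val y)).1, Some (ends (val y)).2)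
  | inr i =>
      match val i with
      | 0 => (None, Some M1)
      | 1 => (None, Some M2)
      | 2 => (Some (ends b).1, None)
      | _ => (Some (ends b).2, None)
      end
  end.

Definition new_kind (E : finType) (kind : E -> ekind) (b : E)
  (x : new_edge b) : ekind :=
  match x with
  | inl y => kind (val y)
  | inr i => if val i == 0 then Diffusive else BlueSolid
  end.

Definition b2_edge (E : finType) (b : E) : new_edge b := inr (@Ordinal 4 1 isT).

(* Main.v *)
Require Import Defs.
From mathcomp Require Import all_boot.
From Stdlib Require Import Classical.
Set Implicit Arguments. Unset Strict Implicit. Unset Printing Implicit Defensive.

Section Gen.
Variables (V E : finType) (ends : E -> V * V).

Lemma adj_sym (B : {set E}) : symmetric (adj ends B).
Proof. by move=> x y; apply: eq_existsb => e; rewrite orbC. Qed.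

Lemma conn_sym (B : {set E}) x y : connect (adj ends B) x y = connect (adj ends B) y x.
Proof. exact: (sym_connect_sym (adj_sym B)). Qed.

Lemma adj_edge (B : {set E}) e : e \in B -> adj ends B (ends e).1 (ends e).2.
Proof. by move=> eB; apply/existsP; exists e; rewrite eB -surjective_pairing eqxx. Qed.

Lemma conn_mono (B B' : {set E}) x y : B \subset B' ->
  connect (adj ends B) x y -> connect (adj ends B') x y.
Proof.
move=> sB; apply: connect_sub => u v /existsP [e /andP [eB h]].
by apply: connect1; apply/existsP; exists e; rewrite (subsetP sB _ eB) h.
Qed.

Lemma cst_conn (B : {set E}) : connected_by ends B -> contains_spanning_tree ends B.
Proof.
have [n] := ubnP #|B|; elim: n B => // n IH B; rewrite ltnS => hB hc.
case: (classic (spanning_tree ends B)) => [st|nst]; first by exists B.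
have [e [eB ce]] : exists e, e \in B /\ connected_by ends (B :\ e).
  by apply: NNPP => H; apply: nst; split => // e eB ce; apply: H; exists e.
have [|T [sT stT]] := IH (B :\ e) _ ce.
  by move: hB; rewrite (cardsD1 e B) eB.
by exists T; split => //; apply: subset_trans sT (subsetDl _ _).
Qed.

Lemma conn_cst (B : {set E}) : contains_spanning_tree ends B -> connected_by ends B.
Proof. by move=> [T [sT [cT _]]] x y; apply: conn_mono sT (cT x y). Qed.
End Gen.

Lemma dc_del (V E : finType) (ends : E -> V * V) (kind : E -> ekind) (e : E) :
  doubly_connected (del_ends ends (e:=e)) (del_kind kind (e:=e)) ->
  doubly_connected ends kind.
Proof.
move=> [B1 [B2 [hd hk1 hk2 hc1 hc2]]].
have hconn B : contains_spanning_tree (del_ends ends (e:=e)) B ->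
    contains_spanning_tree ends (val @: B).
  move/conn_cst => hc; apply: cst_conn => x y.
  apply: connect_sub (hc x y) => u v /existsP [a /andP [aB h]].
  by apply: connect1; apply/existsP; exists (val a); rewrite imset_f.
exists (val @: B1), (val @: B2); split; [| | | exact: hconn | exact: hconn].
- by rewrite imset_disjoint //; exact: val_inj.
- by move=> x /imsetP [a aA ->]; apply: hk1.
- by move=> x /imsetP [a aA ->]; apply: hk2.
Qed.

Lemma conn_map (V V' E E' : finType) (ends : E -> V * V) (ends' : E' -> V' * V')
  (B : {set E}) (B' : {set E'}) (f : V -> V') :
  (forall e, e \in B -> connect (adj ends' B') (f (ends e).1) (f (ends e).2)) ->
  forall x y, connect (adj ends B) x y -> connect (adj ends' B') (f x) (f y).
Proof.
move=> H x y /connectP [p pth ->]; elim: p x pth => [|z p IH] x /=.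
  by rewrite connect0.
case/andP => /existsP [e /andP [eB /orP [/eqP h|/eqP h]]] hp.
  by apply: connect_trans (IH _ hp); have := H e eB; rewrite h.
apply: connect_trans (IH _ hp); rewrite conn_sym; have := H e eB; by rewrite h.
Qed.

Theorem claimA3 (V E : finType) (ends : E -> V * V) (kind : E -> ekind)
  (HG : molecular_graph ends) (Hdc : doubly_connected ends kind)
  (M1 M2 : V) (b : E) (Hb : kind b = BlueSolid) :
  redundant (new_ends ends M1 M2) (new_kind kind (b:=b)) (b2_edge b).
Proof.
set ends' := del_ends (new_ends ends M1 M2) (e:=b2_edge b).
set kind' := del_kind (new_kind kind (b:=b)) (e:=b2_edge b).
have Hdel : doubly_connected ends' kind'.
  move: Hdc => [B1 [B2 [hd hk1 hk2 hc1 hc2]]].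
  pose SB := [set x : {x : new_edge b | x != b2_edge b} |
     match val x with inl y => val y \in B1 | inr i => val i == 0 end].
  pose SU := [set x : {x : new_edge b | x != b2_edge b} |
     match val x with inl y => val y \in B2 | inr i => (val i == 2) || (val i == 3) end].
  have oldedge (S : {set {x : new_edge b | x != b2_edge b}}) e (neb : e != b) :
      forall x, x \in S -> inl (exist _ e neb) = val x ->
      connect (adj ends' S) (Some (ends e).1) (Some (ends e).2).
    move=> x xS ex; apply: connect1.
    have := adj_edge ends' xS; by rewrite /ends' /del_ends -ex.
  exists SB, SU; split.
  - rewrite -setI_eq0; apply/eqP/setP => x; rewrite !inE.
    case: x => [[y|[[|[|[|[|k]]]] hi]] hx] //=.
    by apply/negbTE; apply/negP => /andP [h1 h2]; rewrite (disjointFr hd h1) in h2.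
  - move=> [[y|[[|[|[|[|k]]]] hi]] hx]; rewrite inE //=.
    by move=> /hk1.
  - move=> [[y|[[|[|[|[|k]]]] hi]] hx]; rewrite inE //=; first by move/hk2.
    all: try by move=> _; left.
  - apply: cst_conn.
    have hN u : connect (adj ends' SB) None u.
      case: u => [v|]; last exact: connect0.
      have x0 : (inr (@Ordinal 4 0 isT) : new_edge b) != b2_edge b by [].
      apply: (@connect_trans _ _ (Some M1)).
        apply: connect1; have := @adj_edge _ _ ends' SB (exist (fun x : new_edge b => x != b2_edge b) _ x0).
        by rewrite inE; apply.
      apply: (conn_map (f := Some) _ (conn_cst hc1 M1 v)) => e eB.
      have neb : e != b by apply/eqP => eb; move: (hk1 _ eB); rewrite eb Hb.
      by apply: (oldedge _ _ neb (exist _ (inl (exist _ e neb)) isT)) => //; rewrite inE.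
    by move=> x y; apply: connect_trans (hN y); rewrite conn_sym.
  - apply: cst_conn.
    have h3 : connect (adj ends' SU) None (Some (ends b).1).
      have x0 : (inr (@Ordinal 4 2 isT) : new_edge b) != b2_edge b by [].
      rewrite conn_sym; apply: connect1; have := @adj_edge _ _ ends' SU (exist (fun x : new_edge b => x != b2_edge b) _ x0).
      by rewrite inE; apply.
    have h4 : connect (adj ends' SU) None (Some (ends b).2).
      have x0 : (inr (@Ordinal 4 3 isT) : new_edge b) != b2_edge b by [].
      rewrite conn_sym; apply: connect1; have := @adj_edge _ _ ends' SU (exist (fun x : new_edge b => x != b2_edge b) _ x0).
      by rewrite inE; apply.
    have hN u : connect (adj ends' SU) None u.
      case: u => [v|]; last exact: connect0.
      apply: (@connect_trans _ _ (Some (ends b).1)); first exact h3.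
      apply: (conn_map (f := Some) _ (conn_cst hc2 _ v)) => e eB.
      case: (eqVneq e b) => [->|neb].
        apply: (connect_trans _ h4); rewrite conn_sym; exact h3.
      by apply: (oldedge _ _ neb (exist _ (inl (exist _ e neb)) isT)) => //; rewrite inE.
    by move=> x y; apply: connect_trans (hN y); rewrite conn_sym.
split => //; exact: dc_del Hdel.
Qed.
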